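(* Let $\mathcal{M}$ be a monotone model of dimension $n$, $\mathbf{x}\in\{0,1\}^n$ an instance and $\delta\in(0,1]$. If $\mathbf{y}\subseteq\mathbf{x}$ is a $\delta$-sufficient reason for $\mathbf{x}$ under $\mathcal{M}$ that is not minimal, then there is $i\in\{1,\dots,n\}$ with $\mathbf{y}[i]\neq\bot$ such that the partial instance $\mathbf{y}\setminus\{i\}$ (equal to $\mathbf{y}$ except that its $i$-th component is $\bot$) is also a $\delta$-sufficient reason for $\mathbf{x}$ under $\mathcal{M}$.
   Context: A model of dimension $n$ is a Boolean function $\mathcal{M}:\{0,1\}^n\to\{0,1\}$; it is monotone if $\mathbf{x}[i]\le\mathbf{z}[i]$ for all $i$ implies $\mathcal{M}(\mathbf{x})\le\mathcal{M}(\mathbf{z})$. Partial instances are $\mathbf{y}\in\{0,1,\bot\}^n$; $\mathbf{y}\subseteq\mathbf{x}$ iff $\mathbf{y}[i]=\mathbf{x}[i]$ whenever $\mathbf{y}[i]\ne\bot$; $\mathrm{Comp}(\mathbf{y})=\{\mathbf{z}\in\{0,1\}^n:\mathbf{y}\subseteq\mathbf{z}\}$; $|\mathbf{y}|_\bot$ is the number of $\bot$ entries. A $\delta$-sufficient reason for $\mathbf{x}$ under $\mathcal{M}$ is $\mathbf{y}\subseteq\mathbf{x}$ with $|\{\mathbf{z}\in\mathrm{Comp}(\mathbf{y}):\mathcal{M}(\mathbf{z})=\mathcal{M}(\mathbf{x})\}|\ge\delta2^{|\mathbf{y}|_\bot}$; it is minimal if there is no $\delta$-sufficient reason $\mathbf{y}'$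 for $\mathbf{x}$ under $\mathcal{M}$ with $\mathbf{y}'\subseteq\mathbf{y}$, $\mathbf{y}'\neq\mathbf{y}$. *)

(* Defs.v *)
From mathcomp Require Import all_boot all_order all_algebra.
Set Implicit Arguments. Unset Strict Implicit. Unset Printing Implicit Defensive.
Import Order.TTheory GRing.Theory Num.Theory.
Local Open Scope ring_scope.

(* Instances of dimension n: {ffun 'I_n -> bool}.  Partial instances:
   {ffun 'I_n -> option bool}, where None plays the role of bot. *)
Definition inst (n : nat) := {ffun 'I_n -> bool}.
Definition pinst (n : nat) := {ffun 'I_n -> option bool}.
Definition model (n : nat) := inst n -> bool.

Definition monotone n (M : model n) : Prop :=
  forall x z : inst n, (forall i, x i <= z i)%N -> (M x <= M z)%N.

Definition subsumes n (y : pinst n) (x : inst n) : bool :=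
  [forall i, if y i is Some b then b == x i else true].

Definition psubsumes n (y' y : pinst n) : bool :=
  [forall i, if y' i is Some b then y i == Some b else true].

Definition nbot n (y : pinst n) : nat := #|[set i | y i == None]|.

Definition good_count n (M : model n) (x : inst n) (y : pinst n) : nat :=
  #|[set z : inst n | subsumes y z & M z == M x]|.

Definition delta_suff (R : realFieldType) n (M : model n) (x : inst n)
  (delta : R) (y : pinst n) : Prop :=
  subsumes y x /\ (good_count M x y)%:R >= delta * 2%:R ^+ nbot y.

Definition minimal_delta_suff (R : realFieldType) n (M : model n) (x : inst n)
  (delta : R) (y : pinst n) : Prop :=
  delta_suff M x delta y /\
  ~ (exists y' : pinst n, psubsumes y' y /\ y' <> y /\ delta_suff M x delta y').

Definition remove_feat n (y : pinst n) (i : 'I_n) : pinst n :=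
  [ffun j => if j == i then None else y j].

(* Main.v *)
Require Import Defs.
From mathcomp Require Import all_boot all_order all_algebra.
From mathcomp Require Import zify.
From Stdlib Require Import Classical.
Import Order.TTheory GRing.Theory Num.Theory.
Set Implicit Arguments. Unset Strict Implicit. Unset Printing Implicit Defensive.

Section Aux.
Variables (n : nat) (M : model n) (x : inst n).

Definition setf (v : pinst n) (j : 'I_n) (o : option bool) : pinst n :=
  [ffun k => if k == j then o else v k].

Lemma subsumes_setf v j b (z : inst n) :
  subsumes (setf v j (Some b)) z = subsumes (setf v j None) z && (b == z j).
Proof.
apply/forallP/andP => [H|[/forallP H1 /eqP H2] k].
- split; last by have := H j; rewrite ffunE eqxx.
  apply/forallP => k; have := H k; rewrite !ffunE; by case: eqP.
- rewrite ffunE; case: eqP => [->|ne]; first by rewrite H2.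
  have := H1 k; rewrite ffunE; case: eqP => //.
Qed.

Lemma split_count v j :
  good_count M x (setf v j None) =
  good_count M x (setf v j (Some true)) + good_count M x (setf v j (Some false)).
Proof.
rewrite /good_count -(cardsID [set z : inst n | z j]).
congr (_ + _); apply: eq_card => z; rewrite !inE subsumes_setf;
  case: (z j); case: (M z == M x); by case: (subsumes (setf v j None) z).
Qed.

Definition setbit (z : inst n) j b : inst n := [ffun k => if k == j then b else z k].

Lemma mono_count b v j : monotone M -> M x = b ->
  (good_count M x (setf v j (Some (~~ b))) <= good_count M x (setf v j (Some b)))%N.
Proof.
move=> Mm Mx.
pose f := fun z : inst n => setbit z j b.
rewrite /good_count.
set A := [set z : inst n | subsumes (setf v j (Some (~~ b))) z & M z == M x].
have Hinj : {in A &, injective f}.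
  move=> z1 z2; rewrite !inE !subsumes_setf => /andP[/andP[_ /eqP h1] _]
    /andP[/andP[_ /eqP h2] _] e.
  apply/ffunP => k; have := congr1 (fun g : inst n => g k) e; rewrite /f /setbit !ffunE.
  case: eqP => [->|] //; by rewrite -h1 -h2.
rewrite -(card_in_imset Hinj).
apply: subset_leq_card; apply/subsetP => w /imsetP[z zA ew]; subst w.
move: zA; rewrite !inE subsumes_setf => /andP[/andP[Hs /eqP Hz] /eqP HM].
rewrite subsumes_setf; apply/andP; split; last first.
  rewrite Mx; move/eqP: HM; rewrite Mx.
  rewrite /f; clear f Hinj A; case: b Mx Hz => Mx Hz /eqP HM.
  + have : (M z <= M (setbit z j true))%N.
      apply: Mm => k; rewrite /setbit ffunE; case: (k == j) => //; by case: (z k).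
    by rewrite HM; case: (M (setbit z j true)).
  + have : (M (setbit z j false) <= M z)%N.
      apply: Mm => k; rewrite /setbit ffunE; case: (k == j) => //; by case: (z k).
    by rewrite HM; case: (M (setbit z j false)).
apply/andP; split; last by rewrite /f /setbit ffunE eqxx.
apply/forallP => k; move/forallP: Hs => /(_ k); rewrite !ffunE.
by case: eqP.
Qed.

Lemma rem_le (v : pinst n) (j : 'I_n) : monotone M -> v j = Some (M x) ->
  (good_count M x (remove_feat v j) <= 2 * good_count M x v)%N.
Proof.
move=> Mm.
have [b Hb] : exists b, M x = b by eexists.
rewrite Hb => hv.
have ev : v = setf v j (Some b).
  by apply/ffunP => k; rewrite ffunE; case: eqP => [->|].
have er : remove_feat v j = setf v j None by [].
rewrite er split_count; have H := mono_count v j Mm Hb.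
rewrite -ev in H; move: ev H; case: b {Hb hv} => ev; rewrite -ev /= => H; lia.
Qed.

Lemma rem_ge (v : pinst n) (j : 'I_n) : monotone M -> v j = Some (~~ M x) ->
  (2 * good_count M x v <= good_count M x (remove_feat v j))%N.
Proof.
move=> Mm.
have [b Hb] : exists b, M x = b by eexists.
rewrite Hb => hv.
have ev : v = setf v j (Some (~~ b)).
  by apply/ffunP => k; rewrite ffunE; case: eqP => [->|].
have er : remove_feat v j = setf v j None by [].
rewrite er split_count; have H := mono_count v j Mm Hb.
rewrite -ev in H; move: ev H; case: b {Hb hv} => ev; rewrite -ev /= => H; lia.
Qed.

Lemma nbot_rem (v : pinst n) j : v j <> None -> nbot (remove_feat v j) = (nbot v).+1.
Proof.
move=> hv; rewrite /nbot.
have -> : [set i | remove_feat v j i == None] = j |: [set i | v i == None].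
  apply/setP => k; rewrite !inE ffunE; case: (eqVneq k j) => [->|ne] /=; by rewrite ?eqxx.
by rewrite cardsU1 inE; case: (v j) hv.
Qed.

Definition rem_set (w : pinst n) (T : {set 'I_n}) : pinst n :=
  [ffun j => if j \in T then None else w j].

Lemma chain (w : pinst n) (T : {set 'I_n}) : monotone M -> (forall j, j \in T -> w j = Some (M x)) ->
  (good_count M x (rem_set w T) <= 2 ^ #|T| * good_count M x w)%N /\
  nbot (rem_set w T) = (nbot w + #|T|)%N.
Proof.
move=> Mm; move Hk: #|T| => k; elim: k T Hk => [|k IH] T Hk HT.
- have -> : rem_set w T = w.
    by apply/ffunP => j; rewrite ffunE (cards0_eq Hk) inE.
  by rewrite expn0 mul1n addn0.
- have : (0 < #|T|)%N by rewrite Hk.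
  rewrite card_gt0 => /set0Pn[j Hj].
  have HT' : #|T :\ j| = k by have := cardsD1 j T; rewrite Hj Hk add1n => -[].
  have [IH1 IH2] := IH (T :\ j) HT' (fun i Hi => HT i (subsetP (subsetDl T [set j]) i Hi)).
  have -> : rem_set w T = remove_feat (rem_set w (T :\ j)) j.
    apply/ffunP => i; rewrite !ffunE in_setD1; case: eqP => [->|] //=.
    by rewrite Hj.
  have hj : rem_set w (T :\ j) j = Some (M x) by rewrite ffunE setD11 HT.
  split.
  + apply: leq_trans (rem_le Mm hj) _; rewrite expnS -mulnA leq_mul2l IH1 orbT //.
  + by rewrite nbot_rem ?hj // IH2 addnS.
Qed.

End Aux.

Local Open Scope ring_scope.

Theorem lemma1 (R : realFieldType) (n : nat) (M : model n) (x : inst n)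
  (delta : R) (y : pinst n) :
  monotone M -> 0 < delta -> delta <= 1 ->
  delta_suff M x delta y -> ~ minimal_delta_suff M x delta y ->
  exists i : 'I_n, y i <> None /\ delta_suff M x delta (remove_feat y i).
Proof.
move=> Mm dpos d1 [Hsx Hc] Hnm.
have [y' [Hps [Hne [Hsx' Hc']]]] :
    exists y', psubsumes y' y /\ y' <> y /\ delta_suff M x delta y'.
  by apply: NNPP => H; apply: Hnm; split.
have yx : forall k, y k <> None -> y k = Some (x k).
  move=> k; move/forallP: Hsx => /(_ k); case: (y k) => // b /eqP -> //.
have yy' : forall k b, y' k = Some b -> y k = Some b.
  by move=> k b e; move/forallP: Hps => /(_ k); rewrite e => /eqP.
have subrem : forall i, subsumes (remove_feat y i) x.
  move=> i; apply/forallP => k; rewrite ffunE; case: eqP => // _.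
  by move/forallP: Hsx => /(_ k).
pose S := [set k | (y k != None) && (y' k == None)].
have [k0 Hk0] : exists k, k \in S.
  case: (pickP [pred k | y' k != y k]) => [k /= Hk | H0].
  - exists k; rewrite inE; move: Hk; case e: (y' k) => [b|].
    + by rewrite (yy' _ _ e) eqxx.
    + by rewrite eq_sym andbT.
  - by exfalso; apply: Hne; apply/ffunP => k; have := H0 k => /= /negbFE /eqP.
case: (pickP [pred k in S | x k != M x]) => [i /andP[Hi Hxi] | Hall].
- have hyi : y i <> None by move: Hi; rewrite inE => /andP[/eqP].
  exists i; split => //; split; first exact: subrem.
  have e : y i = Some (~~ M x) by rewrite yx //; move: Hxi; case: (x i); case: (M x).
  have H := rem_ge Mm e.
  rewrite nbot_rem // exprS mulrCA.
  apply: le_trans (_ : 2%:R * (good_count M x y)%:R <= _).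
    by apply: ler_wpM2l.
  by rewrite -natrM ler_nat.
- have hyi : y k0 <> None by move: Hk0; rewrite inE => /andP[/eqP].
  exists k0; split => //; split; first exact: subrem.
  have HT : forall j, j \in S :\ k0 -> remove_feat y k0 j = Some (M x).
    move=> j; rewrite in_setD1 => /andP[hj hjS]; rewrite ffunE (negbTE hj).
    have := Hall j; rewrite /= hjS /= => /negbFE /eqP <-.
    by apply: yx; move: hjS; rewrite inE => /andP[/eqP].
  have [C1 C2] := chain Mm HT.
  have ey : rem_set (remove_feat y k0) (S :\ k0) = y'.
    apply/ffunP => k; rewrite !ffunE in_setD1.
    case: eqP => [->|nk] /=.
      by move: Hk0; rewrite inE => /andP[_ /eqP ->].
    idtac; case hS: (k \in S).
      by move: hS; rewrite inE => /andP[_ /eqP ->].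
    move: hS; rewrite inE; case e: (y' k) => [b|] /=.
      by rewrite (yy' _ _ e).
    by rewrite andbT => /negbT; rewrite negbK => /eqP.
  rewrite ey in C1 C2; rewrite C2 in Hc'.
  have Hp : 0 < 2%:R ^+ #|S :\ k0| :> R by rewrite exprn_gt0.
  rewrite -(ler_pM2r Hp) -mulrA -exprD (le_trans Hc') //.
  by rewrite -natrX -natrM ler_nat mulnC.
Qed.
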